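(* Let $(X_1,\|\cdot\|_1)$ and $(X_2,\|\cdot\|_2)$ be two isomorphic Banach spaces. Assume that, for each $\varepsilon>0$, $X_1$ admits a bounded linear operator which is $\varepsilon$-hypercyclic but not hypercyclic. Then, for each $\varepsilon>0$, $X_2$ admits a bounded linear operator which is $\varepsilon$-hypercyclic but not hypercyclic.
   Context: For $\varepsilon>0$, an operator $T$ on a Banach space $X$ is $\varepsilon$-hypercyclic if there is $x\in X$ such that for every $y\in X\setminus\{0\}$ there is $n\in\mathbb{N}$ with $\|T^nx-y\|\le\varepsilon\|y\|$; $T$ is hypercyclic if some orbit $\{T^nx:n\in\mathbb{N}\}$ is dense in $X$. *)

(* Defs.v *)
From HB Require Import structures.
From mathcomp Require Import all_boot all_order all_algebra.
From mathcomp Require Import all_classical all_reals all_analysis.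
Set Implicit Arguments. Unset Strict Implicit. Unset Printing Implicit Defensive.
Import Order.TTheory GRing.Theory Num.Theory.
Import numFieldNormedType.Exports.
Local Open Scope classical_set_scope.
Local Open Scope ring_scope.

Definition orbit_of (K : numFieldType) (X : normedModType K)
  (T : X -> X) (x : X) : set X := range (fun n : nat => iter n T x).

Definition hypercyclic (K : numFieldType) (X : normedModType K)
  (T : X -> X) : Prop := exists x : X, dense (orbit_of T x).

Definition eps_hypercyclic (K : numFieldType) (X : normedModType K)
  (eps : K) (T : X -> X) : Prop :=
  exists x : X, forall y : X, y != 0 ->
    exists n : nat, `|iter n T x - y| <= eps * `|y|.

Definition bounded_operator (K : numFieldType) (X : normedModType K)
  (T : X -> X) : Prop := linear T /\ continuous T.

Definition isomorphic_spaces (K : numFieldType) (X1 X2 : normedModType K) : Prop :=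
  exists (J : X1 -> X2) (J' : X2 -> X1),
    [/\ linear J, continuous J, linear J', continuous J' &
        (cancel J J' /\ cancel J' J)].

(* Main.v *)
Require Import Defs.
From HB Require Import structures.
From mathcomp Require Import all_boot all_order all_algebra.
From mathcomp Require Import all_classical all_reals all_analysis.
From mathcomp Require Import ring.
Import Order.TTheory GRing.Theory Num.Theory.
Import numFieldNormedType.Exports.
Local Open Scope classical_set_scope.
Local Open Scope ring_scope.

Section B.
Variables (K : numFieldType) (V W : normedModType K) (f : V -> W).
Hypothesis (lf : linear f) (cf : continuous f).
HB.instance Definition _ := GRing.isLinear.Build K V W *:%R f lf.
Lemma opbound : exists2 r : K, 0 < r & forall x, `|f x| <= r * `|x|.
Proof.
have := (linear_boundedP f).1 ((linear_bounded_continuous f).2 cf).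
move=> /pinfty_ex_gt0 [r r0 H]; by exists r.
Qed.
End B.

Lemma linB (K : numFieldType) (V W : normedModType K) (f : V -> W) :
  linear f -> forall u v, f (u - v) = f u - f v.
Proof.
move=> lf u v; have -> : u - v = (-1) *: v + u by rewrite scaleN1r addrC.
by rewrite lf scaleN1r addrC.
Qed.

Arguments linB {K V W f}.

Lemma lin0 (K : numFieldType) (V W : normedModType K) (f : V -> W) :
  linear f -> f 0 = 0.
Proof. by move=> lf; rewrite -(subrr 0) (linB lf) subrr. Qed.
Arguments lin0 {K V W f}.

Lemma aux_eq (F : fieldType) (e t a b : F) : a != 0 -> b != 0 ->
  a * (e / (a * b) * (b * t)) = e * t.
Proof. by move=> an bn; field; rewrite an bn. Qed.

Theorem proposition6p1 (K : numFieldType)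
  (X1 X2 : completeNormedModType K) :
  isomorphic_spaces X1 X2 ->
  (forall eps : K, 0 < eps ->
     exists T : X1 -> X1,
       [/\ bounded_operator T, eps_hypercyclic eps T & ~ hypercyclic T]) ->
  forall eps : K, 0 < eps ->
    exists T : X2 -> X2,
      [/\ bounded_operator T, eps_hypercyclic eps T & ~ hypercyclic T].
Proof.
move=> [J [J' [lJ cJ lJ' cJ' [JK J'K]]]] H eps eps0.
have [a a0 Ha] := @opbound _ _ _ J lJ cJ.
have [b b0 Hb] := @opbound _ _ _ J' lJ' cJ'.
have d0 : 0 < eps / (a * b) by rewrite divr_gt0 // mulr_gt0.
have [T [[lT cT] [x1 Hx1] nH]] := H _ d0.
exists (J \o T \o J').
have iterE : forall n z, iter n (J \o T \o J') z = J (iter n T (J' z)).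
  elim=> [|n IH] z /=; first by rewrite J'K.
  by rewrite IH JK.
split.
- split.
  + by move=> c u v /=; rewrite (lJ' c u v) (lT c) (lJ c).
  + move=> z; apply: continuous_comp; first exact: cJ'.
    apply: continuous_comp; [exact: cT | exact: cJ].
- exists (J x1) => y y0.
  have y10 : J' y != 0.
    by apply: contra y0 => /eqP e; rewrite -[y]J'K e (lin0 lJ).
  have [n Hn] := Hx1 _ y10.
  exists n; rewrite iterE JK.
  have -> : J (iter n T x1) - y = J (iter n T x1 - J' y).
    by rewrite (linB lJ) J'K.
  apply: (le_trans (Ha _)).
  apply: (@le_trans _ _ (a * (eps / (a * b) * (b * `|y|)))).
    rewrite ler_pM2l //; apply: (le_trans Hn); rewrite ler_pM2l //; exact: Hb.
  have an : a != 0 by rewrite gt_eqF.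
  have bn : b != 0 by rewrite gt_eqF.
  by rewrite (@aux_eq _ eps `|y| a b an bn).
- move=> [x2 Hd]; apply: nH; exists (J' x2); move=> U [p Up] oU.
  have [] := Hd (preimage J' U).
  - by exists (J p); rewrite /= JK.
  - by apply: open_comp => // z _; exact: cJ'.
  move=> y [Py [n _ Hn]]; subst y.
  exists (iter n T (J' x2)); split; last by exists n.
  by move: Py; rewrite /= iterE JK.
Qed.
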